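(* Let $G$ be a finite group and $G^- = \{ g \in G : \langle g \rangle \text{ is not a maximal cyclic subgroup of } G\}$. If $G^-$ is a subgroup of $G$, then every element of $G$ has prime power order.
   Context: A cyclic subgroup $C$ of $G$ is maximal cyclic if there is no cyclic subgroup $D$ of $G$ with $C < D$. *)

(* Defs.v *)
From mathcomp Require Import all_boot all_fingroup all_solvable.
Set Implicit Arguments. Unset Strict Implicit. Unset Printing Implicit Defensive.
Local Open Scope group_scope.

Definition max_cyclic (gT : finGroupType) (G C : {set gT}) : bool :=
  [&& C \subset G, cyclic C &
      ~~ [exists D : {group gT}, [&& D \subset G, cyclic D & C \proper D]]].

Definition Gminus (gT : finGroupType) (G : {set gT}) : {set gT} :=
  [set g in G | ~~ max_cyclic G <[g]>].

(* Main.v *)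
Require Import Defs.
From mathcomp Require Import all_boot all_fingroup all_solvable.
From mathcomp Require Import zify.
Local Open Scope group_scope.

Lemma small_in_Gminus (gT : finGroupType) (G : {group gT}) (h x : gT) :
  h \in G -> x \in <[h]> -> (#[x] < #[h])%N -> x \in Gminus G.
Proof.
move=> hG xh lt.
have xG : x \in G by apply: (subsetP _ _ xh); rewrite cycle_subG.
rewrite /Gminus inE xG /= /max_cyclic negb_and; apply/orP; right.
rewrite negb_and; apply/orP; right; rewrite negbK.
apply/existsP; exists <[h]>%G.
by rewrite cycle_subG hG cycle_cyclic properEcard cycle_subG xh lt.
Qed.

Lemma nonpp_in_Gminus (gT : finGroupType) (G : {group gT}) (h : gT) :
  group_set (Gminus G) -> h \in G ->
  ~ (exists p k : nat, prime p /\ #[h] = (p ^ k)%N) -> h \in Gminus G.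
Proof.
move=> gs hG npp.
set n := #[h].
have n0 : (0 < n)%N by apply: order_gt0.
have n1 : (1 < n)%N.
  rewrite ltn_neqAle n0 andbT; apply/negP => /eqP e.
  by apply: npp; exists 2%N, 0%N; split=> //; rewrite expn0; move: e; rewrite /n => ->.
set p := pdiv n.
have pp : prime p by apply: pdiv_prime.
have ppi : p \in \pi(n) by rewrite pi_pdiv.
have np1 : (1 < n`_p)%N by rewrite p_part_gt1.
have npl : (n`_p < n)%N.
  rewrite ltn_neqAle dvdn_leq ?dvdn_part // andbT.
  apply/negP => /eqP e; apply: npp; exists p, (logn p n).
  by rewrite -p_part e.
have np'l : (n`_p^' < n)%N.
  rewrite -{2}(partnC p n0); apply: ltn_Pmull => //.
pose H := Group gs.
have a : h.`_p \in Gminus G.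
  apply: (@small_in_Gminus _ _ _ _ hG); first exact: cycle_constt.
  by rewrite order_constt.
have b : h.`_p^' \in Gminus G.
  apply: (@small_in_Gminus _ _ _ _ hG); first exact: cycle_constt.
  by rewrite order_constt.
rewrite -(consttC p h).
exact: (@groupM _ H _ _ a b).
Qed.

From Stdlib Require Import Classical_Prop.

Theorem lemma3p3 (gT : finGroupType) (G : {group gT}) :
  group_set (Gminus G) ->
  forall g, g \in G -> exists p k : nat, prime p /\ #[g] = (p ^ k)%N.
Proof.
move=> gs g.
move: {2}(#|G| - #[g])%N (leqnn (#|G| - #[g])%N) => m.
elim: m g => [|m IH] g Hm gG;
  (case: (boolP (g \in Gminus G)) => [gm|gn]; last first;
  [ apply: NNPP => npp; by rewrite (@nonpp_in_Gminus _ _ _ gs gG npp) in gn | ]);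
  move: gm; rewrite /Gminus inE gG /= /max_cyclic cycle_subG gG cycle_cyclic /= negbK;
  case/existsP => D /and3P [DG cD gD].
- have := proper_card gD; have := subset_leq_card DG.
  move: Hm; rewrite leqn0 subn_eq0 => Hm.
  move=> a b; have := leq_trans b a.
  by rewrite ltnNge Hm.
- case/cyclicP: cD => h Dh.
  have hG : h \in G by rewrite -cycle_subG -Dh.
  have lt := proper_card gD; rewrite Dh in lt.
  have Hm' : (#|G| - #[h] <= m)%N.
    have le := subset_leq_card DG; rewrite Dh in le.
    move: Hm le lt; rewrite /order; move: #|G| #|<[g]>| #|<[h]>| => x y z; lia.
  have [p [k [pp hk]]] := IH h Hm' hG.
  have dv : (#[g] %| #[h])%N.
    by have := cardSg (proper_sub gD); rewrite Dh.
  rewrite hk in dv; case/(dvdn_pfactor _ _ pp): dv => j _ e.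
  by exists p, j.
Qed.
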